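(* Let $a,b$ be positive integers, $h(j)=aj^2+b$ for $j\ge0$, $h(j)=0$ for $j<0$, and $\alpha=a/b$. Then $$\operatorname{hdepth}(h)=\begin{cases}\lfloor\alpha\rfloor+1,&\alpha\in(0,7),\\ 8,&\alpha\in[7,\tfrac{22}{3}],\\ 7,&\alpha\in(\tfrac{22}{3},8],\\ 6,&\alpha\in(8,11],\\ 5,&\alpha\in(11,\infty).\end{cases}$$
   Context: For a nonzero function $h:\mathbb Z\to\mathbb Z_{\ge 0}$ with $h(j)=0$ for all sufficiently negative $j$, and integers $k\le d$, set $\beta_k^d(h)=\sum_{j\le k}(-1)^{k-j}\binom{d-j}{k-j}h(j)$, and $\operatorname{hdepth}(h)=\max\{d\in\mathbb Z:\ \beta_k^d(h)\ge 0\text{ for all integers }k\le d\}$. *)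

(* Defs.v *)
From mathcomp Require Import all_boot all_order all_algebra.
Set Implicit Arguments. Unset Strict Implicit. Unset Printing Implicit Defensive.
Import Order.TTheory GRing.Theory Num.Theory.
Local Open Scope ring_scope.

(* beta_k^d(h) = sum_{j <= k} (-1)^(k-j) C(d-j, k-j) h(j), for a function
   h : int -> nat vanishing below the integer L (h j = 0 for j < L).
   The sum ranges over L <= j <= k, i.e. j = L + i with i = 0 .. k - L. *)
Definition beta (h : int -> nat) (L d k : int) : int :=
  \sum_(i < (absz (k - L)).+1 | (L + i%:Z <= k)%R)
     (-1) ^+ (absz (k - (L + i%:Z))%R) *
     ('C(absz (d - (L + i%:Z))%R, absz (k - (L + i%:Z))%R))%:Z * (h (L + i%:Z))%:Z.

Definition hdepth_ok (h : int -> nat) (L d : int) : Prop :=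
  forall k : int, k <= d -> 0 <= beta h L d k.

Definition is_hdepth (h : int -> nat) (L d : int) : Prop :=
  hdepth_ok h L d /\ forall d' : int, hdepth_ok h L d' -> d' <= d.

Definition hquad (a b : nat) (j : int) : nat :=
  if 0 <= j then (a * absz j ^ 2 + b)%N else 0%N.

(* Main.v *)
Require Import Defs.
From mathcomp Require Import all_boot all_order all_algebra.
From mathcomp Require Import zify ring.
Import Order.TTheory GRing.Theory Num.Theory.
Local Open Scope ring_scope.
Definition Bf (f : nat -> int) (d k : nat) : int :=
  \sum_(0 <= j < k.+1) (-1) ^+ (k - j)%N * ('C(d - j, k - j))%:Z * f j.

Lemma beta_neg a b L d k : k < 0 -> beta (hquad a b) L d k = 0.
Proof.
move=> hk; rewrite /beta big1 // => i Hi.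
rewrite /hquad ifF ?mulr0 //; apply/negbTE; rewrite -ltNge; lia.
Qed.

Lemma beta_pos a b (n dn kn : nat) :
  (kn <= dn)%N ->
  beta (hquad a b) (- n%:Z) dn%:Z kn%:Z = Bf (fun j => (hquad a b j%:Z)%:Z) dn kn.
Proof.
move=> hkd; rewrite /beta.
have E : absz (kn%:Z - - n%:Z) = (kn + n)%N by lia.
rewrite E.
rewrite (eq_bigl xpredT); last first.
  move=> i /=; have := ltn_ord i; move: (nat_of_ord i) => m hm.
  apply/idP; lia.
rewrite -(big_mkord xpredT (fun i : nat => (-1) ^+ absz (kn%:Z - (- n%:Z + i%:Z))%R *
     ('C(absz (dn%:Z - (- n%:Z + i%:Z))%R, absz (kn%:Z - (- n%:Z + i%:Z))%R))%:Z * (hquad a b (- n%:Z + i%:Z))%:Z)).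
rewrite (big_cat_nat (n:=n)) /= ?leq0n //; last by lia.
rewrite big_nat_cond big1 ?add0r; last first.
  move=> i /andP[/andP[_ hi] _]; rewrite /hquad ifF ?mulr0 //; apply/negbTE; rewrite -ltNge; lia.
rewrite -{1}(add0n n) big_addn /Bf.
have -> : ((kn + n).+1 - n = kn.+1)%N by lia.
apply: eq_big_nat => j /andP[_ hj].
have -> : - n%:Z + (j + n)%N%:Z = j%:Z by lia.
have -> : absz (kn%:Z - j%:Z) = (kn - j)%N by lia.
have -> : absz (dn%:Z - j%:Z) = (dn - j)%N by lia.
by [].
Qed.
Definition CA d k := Bf (fun j => (j ^ 2)%N%:Z) d k.
Definition CB d k := Bf (fun _ => 1) d k.
Definition CAu (d k : nat) : int := foldr (fun j acc => (-1) ^+ (k - j)%N * ('C(d - j, k - j))%:Z * (j^2)%N%:Z + acc) 0 (iota 0 k.+1).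
Definition CBu (d k : nat) : int := foldr (fun j acc => (-1) ^+ (k - j)%N * ('C(d - j, k - j))%:Z * 1 + acc) 0 (iota 0 k.+1).
Lemma CAE d k : CA d k = CAu d k. Proof. by rewrite /CA /Bf unlock. Qed.
Lemma CBE d k : CB d k = CBu d k. Proof. by rewrite /CB /Bf unlock. Qed.

Lemma lin a b d k : Bf (fun j => (hquad a b j%:Z)%:Z) d k = a%:Z * CA d k + b%:Z * CB d k.
Proof.
rewrite /CA /CB /Bf !mulr_sumr -big_split; apply: eq_bigr => j _ /=.
rewrite /hquad /= PoszD PoszM. ring.
Qed.

Lemma Brec f d k : (k <= d)%N -> Bf f d.+1 k.+1 = Bf f d k.+1 - Bf f d k.
Proof.
move=> hkd; rewrite /Bf (big_nat_recr k.+1) // (big_nat_recr k.+1 _ _ (leq0n _)) /=.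
rewrite !subnn !bin0 !expr0 addrAC -sumrB; congr (_ + _).
apply: eq_big_nat => j /andP[_ hj].
have -> : (k.+1 - j = (k - j).+1)%N by lia.
have -> : (d.+1 - j = (d - j).+1)%N by lia.
rewrite binS exprS PoszD; ring.
Qed.

Lemma okdown f d : (forall k, (k <= d.+1)%N -> 0 <= Bf f d.+1 k) ->
  forall k, (k <= d)%N -> 0 <= Bf f d k.
Proof.
move=> H; elim=> [|k IH] hk.
  have := H 0%N isT. by rewrite /Bf !big_nat1 !subnn !bin0.
have E := @Brec f d k (ltnW hk).
rewrite (_ : Bf f d k.+1 = Bf f d.+1 k.+1 + Bf f d k); last by rewrite E; ring.
apply: addr_ge0; [apply: H; lia | apply: IH; lia].
Qed.

Lemma okdownN f m d : (forall k, (k <= m + d)%N -> 0 <= Bf f (m + d) k) ->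
  forall k, (k <= d)%N -> 0 <= Bf f d k.
Proof.
elim: m => [//|m IH] H; apply: IH; apply: okdown => k hk; exact: H.
Qed.

Lemma floorq (a b : nat) : (0 < b)%N -> Num.floor (a%:R / b%:R : rat) = (a %/ b)%:Z.
Proof.
move=> hb; apply: floor_def; rewrite -PoszD -!pmulrn.
have hb' : (0 : rat) < b%:R by rewrite ltr0n.
rewrite ler_pdivlMr // ltr_pdivrMr // -!natrM ler_nat ltr_nat.
apply/andP; split; lia.
Qed.
Lemma ratlt (a b p q : nat) : (0 < b)%N -> (0 < q)%N ->
  (a%:R / b%:R < p%:R / q%:R :> rat) = (a * q < p * b)%N.
Proof.
move=> hb hq.
have hb' : (0 : rat) < b%:R by rewrite ltr0n.
have hq' : (0 : rat) < q%:R by rewrite ltr0n.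
by rewrite ltr_pdivrMr // mulrAC ltr_pdivlMr // -!natrM ltr_nat.
Qed.
Lemma ratle (a b p q : nat) : (0 < b)%N -> (0 < q)%N ->
  (a%:R / b%:R <= p%:R / q%:R :> rat) = (a * q <= p * b)%N.
Proof.
move=> hb hq.
have hb' : (0 : rat) < b%:R by rewrite ltr0n.
have hq' : (0 : rat) < q%:R by rewrite ltr0n.
by rewrite ler_pdivrMr // mulrAC ler_pdivlMr // -!natrM ler_nat.
Qed.
Lemma c_lt (a b c : nat) : (0 < b)%N -> (a%:R / b%:R < c%:R :> rat) = (a < c * b)%N.
Proof. move=> hb. by rewrite -[c%:R : rat]divr1 (ratlt a b c 1) // muln1. Qed.
Lemma c_le (a b c : nat) : (0 < b)%N -> (a%:R / b%:R <= c%:R :> rat) = (a <= c * b)%N.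
Proof. move=> hb. by rewrite -[c%:R : rat]divr1 (ratle a b c 1) // muln1. Qed.

Definition Bq a b d k := Bf (fun j => (hquad a b j%:Z)%:Z) d k.

Lemma ok_of a b n (D : nat) : (forall k, (k <= D)%N -> 0 <= Bq a b D k) ->
  hdepth_ok (hquad a b) (- n%:Z) D%:Z.
Proof.
move=> H k hk; case: (ltrP k 0) => [hk0|hk0]; first by rewrite beta_neg.
case: k hk hk0 => [kn|kn] hk hk0; last by [].
rewrite beta_pos; last by lia.
apply: H; lia.
Qed.

Lemma depth_of a b n (D k0 : nat) : (forall k, (k <= D)%N -> 0 <= Bq a b D k) ->
  (k0 <= D.+1)%N -> Bq a b D.+1 k0 < 0 -> is_hdepth (hquad a b) (- n%:Z) D%:Z.
Proof.
move=> H hk0 hneg; split; first exact: ok_of.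
move=> d' Hok; rewrite leNgt; apply/negP => hlt.
case: d' Hok hlt => [dn|dn] Hok hlt; last by [].
have Hn : forall k, (k <= (dn - D.+1) + D.+1)%N -> 0 <= Bq a b ((dn - D.+1) + D.+1) k.
  have -> : ((dn - D.+1) + D.+1 = dn)%N by lia.
  move=> k hk; have := Hok k%:Z; rewrite beta_pos //; apply; lia.
have := @okdownN (fun j => (hquad a b j%:Z)%:Z) (dn - D.+1) D.+1 Hn k0 hk0; rewrite -/(Bq a b D.+1 k0); lia.
Qed.

Ltac evC := repeat match goal with
 | |- context [CAu ?d ?k] => let v := eval vm_compute in (CAu d k) in change (CAu d k) with v
 | |- context [CBu ?d ?k] => let v := eval vm_compute in (CBu d k) in change (CBu d k) with v
 end.

Ltac solveD D k0 := apply: (@depth_of _ _ _ D k0);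
  [ move=> [|[|[|[|[|[|[|[|[|?]]]]]]]]] ?; rewrite /Bq lin CAE CBE; try (exfalso; lia); evC; lia
  | by []
  | rewrite /Bq lin CAE CBE; evC; lia ].

Theorem theorem3p10 (a b : nat) (L : int) :
  (0 < a)%N -> (0 < b)%N -> L <= 0 ->
  let alpha : rat := a%:R / b%:R in
  is_hdepth (hquad a b) L
    (if alpha < 7 then Num.floor alpha + 1
     else if alpha <= 22%:R / 3%:R then 8
     else if alpha <= 8 then 7
     else if alpha <= 11 then 6
     else 5).
Proof.
move=> ha hb hL alpha.
have EL : L = - (absz L)%:Z by lia.
rewrite EL {EL hL}; move: (absz L) => n.
rewrite /alpha (c_lt a b 7 hb) (ratle a b 22 3 hb isT) (c_le a b 8 hb) (c_le a b 11 hb).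
case: ifP => h1.
  rewrite floorq //.
  have hq : ((a %/ b)%N < 7)%N by rewrite div.ltn_divLR.
  have ediv := div.divn_eq a b; have hm := div.ltn_pmod a hb.
  move: ediv hm hq; move: (a %/ b)%N (a %% b)%N => q r ediv hm hq.
  have -> : q%:Z + 1 = q.+1%:Z by lia.
  case: q ediv hq => [|[|[|[|[|[|[|q]]]]]]] ediv hq; try (exfalso; lia).
  - solveD 1%N 1%N.
  - solveD 2%N 1%N.
  - solveD 3%N 1%N.
  - solveD 4%N 1%N.
  - solveD 5%N 1%N.
  - solveD 6%N 1%N.
  - solveD 7%N 1%N.
case: ifP => h2; first by solveD 8%N 1%N.
case: ifP => h3; first by solveD 7%N 2%N.
case: ifP => h4; first by solveD 6%N 2%N.
by solveD 5%N 2%N.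
Qed.
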